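(* For every positive integer $n$, the number of pseudo-symmetric gapsets in $\mathcal{G}_{2n+1}(3n+2)$ is $2^{n-1}$.
   Context: A gapset is a finite set $G\subset\mathbb{N}=\{1,2,\dots\}$ such that whenever $z\in G$ and $z=x+y$ with $x,y\in\mathbb{N}$, then $x\in G$ or $y\in G$; its genus is $g=\#G$. Writing $G=\{\ell_1<\dots<\ell_g\}$, the Frobenius number is $F(G)=\ell_g$; $G$ is pseudo-symmetric if $F(G)=2g-2$. $G$ is pure $\kappa$-sparse if $\ell_{i+1}-\ell_i\le\kappa$ for all $i$ with equality for some $i$; $\mathcal{G}_\kappa(g)$ is the set of pure $\kappa$-sparse gapsets of genus $g$. *)

(* Defs.v *)
From mathcomp Require Import all_boot all_order.
From mathcomp Require Import finmap.
Set Implicit Arguments. Unset Strict Implicit. Unset Printing Implicit Defensive.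
Local Open Scope fset_scope.

Definition gapset (G : {fset nat}) : Prop :=
  0 \notin G /\
  forall z x y : nat, z \in G -> 0 < x -> 0 < y -> z = (x + y)%N ->
    (x \in G) || (y \in G).

Definition genus (G : {fset nat}) : nat := #|` G|.

(* the elements of G listed increasingly: l_1 < ... < l_g
   (here 0-indexed: (gap_list G)`_0 < ... ) *)
Definition gap_list (G : {fset nat}) : seq nat := sort leq (enum_fset G).

Definition frobenius (G : {fset nat}) : nat := \max_(x <- enum_fset G) x.

Definition pseudo_symmetric (G : {fset nat}) : Prop :=
  frobenius G = (2 * genus G - 2)%N.

Definition pure_sparse (kappa : nat) (G : {fset nat}) : Prop :=
  let l := gap_list G in
  (forall i, i.+1 < size l -> (nth 0 l i.+1 - nth 0 l i <= kappa)%N) /\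
  (exists i, i.+1 < size l /\ (nth 0 l i.+1 - nth 0 l i)%N = kappa).

Definition in_G (kappa g : nat) (G : {fset nat}) : Prop :=
  gapset G /\ pure_sparse kappa G /\ genus G = g.

(* Main.v *)
Require Import Defs.
From mathcomp Require Import all_boot all_order.
From mathcomp Require Import finmap.
From mathcomp Require Import zify.
Set Implicit Arguments. Unset Strict Implicit.


Section GL.
Variable G : {fset nat}.
Let l := gap_list G.

Lemma gl_sorted : sorted ltn l.
Proof.
rewrite ltn_sorted_uniq_leq sort_uniq fset_uniq /=.
exact: (sort_sorted leq_total).
Qed.

Lemma gl_mem x : (x \in l) = (x \in G).
Proof. by rewrite /l /gap_list mem_sort. Qed.

Lemma gl_lt i j : i < size l -> j < size l -> (nth 0 l i < nth 0 l j) = (i < j).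
Proof.
move=> hi hj.
have H := sorted_ltn_nth ltn_trans 0 gl_sorted.
case: (ltngtP i j) => h.
- exact: H.
- apply/negbTE; rewrite -leqNgt; apply: ltnW; exact: H.
- by rewrite h ltnn.
Qed.

Lemma gl_nth_mem i : i < size l -> nth 0 l i \in G.
Proof. by move=> h; rewrite -gl_mem mem_nth. Qed.

Lemma gl_ex x : x \in G -> exists2 i, i < size l & nth 0 l i = x.
Proof.
rewrite -gl_mem => h; exists (index x l); first by rewrite index_mem.
exact: nth_index.
Qed.

Lemma gl_step k :
  (forall a b, a \in G -> b \in G -> a < b -> exists2 c, c \in G & a < c <= a + k) ->
  forall i, i.+1 < size l -> (nth 0 l i.+1 - nth 0 l i <= k)%N.
Proof.
move=> H i hi.
have hi' : i < size l by lia.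
have := H _ _ (gl_nth_mem hi') (gl_nth_mem hi).
rewrite gl_lt // => /(_ (ltnSn i)) [c cG /andP[c1 c2]].
have [j hj ej] := gl_ex cG.
move: c1; rewrite -ej gl_lt // => ij.
have : nth 0 l i.+1 <= nth 0 l j.
  rewrite leq_eqVlt; case: (ltngtP i.+1 j) => h.
  - by rewrite gl_lt // h orbT.
  - lia.
  - by rewrite h eqxx.
lia.
Qed.

Lemma gl_gap a k : 0 < k -> a \in G -> a + k \in G ->
  (forall c, c \in G -> a < c -> c < a + k -> False) ->
  exists i, i.+1 < size l /\ (nth 0 l i.+1 - nth 0 l i)%N = k.
Proof.
move=> k0 aG bG H.
have [i hi ei] := gl_ex aG.
have [j hj ej] := gl_ex bG.
have ij : i < j by rewrite -gl_lt // ei ej; lia.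
exists i; split; first lia.
have hi1 : i.+1 < size l by lia.
have h1 : a < nth 0 l i.+1 by rewrite -ei gl_lt.
have h2 : nth 0 l i.+1 <= a + k.
  rewrite -ej leq_eqVlt; case: (ltngtP i.+1 j) => h.
  - by rewrite gl_lt // h orbT.
  - lia.
  - by rewrite h eqxx.
case: (ltngtP (nth 0 l i.+1) (a + k)) => h3; last lia.
- exfalso; exact: (H _ (gl_nth_mem hi1) h1 h3).
- lia.
Qed.

Lemma gl_gap_inv k : (exists i, i.+1 < size l /\ (nth 0 l i.+1 - nth 0 l i)%N = k) ->
  0 < k -> exists a, [/\ a \in G, a + k \in G &
  forall c, c \in G -> a < c -> c < a + k -> False].
Proof.
move=> [i [hi e]] k0.
have hi' : i < size l by lia.
have lt : nth 0 l i < nth 0 l i.+1 by rewrite gl_lt.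
exists (nth 0 l i); split.
- exact: gl_nth_mem.
- have -> : nth 0 l i + k = nth 0 l i.+1 by lia.
  exact: gl_nth_mem.
- move=> c cG c1 c2.
  have [j hj ej] := gl_ex cG.
  move: c1 c2; rewrite -ej gl_lt // => c1.
  have -> : nth 0 l i + k = nth 0 l i.+1 by lia.
  rewrite gl_lt //; lia.
Qed.

Lemma gl_step_inv k :
  (forall i, i.+1 < size l -> (nth 0 l i.+1 - nth 0 l i <= k)%N) ->
  forall a b, a \in G -> b \in G -> a < b -> exists2 c, c \in G & a < c <= a + k.
Proof.
move=> H a b aG bG ab.
have [i hi ei] := gl_ex aG.
have [j hj ej] := gl_ex bG.
have ij : i < j by rewrite -gl_lt // ei ej.
have hi1 : i.+1 < size l by lia.
exists (nth 0 l i.+1); first exact: gl_nth_mem.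
have := H i hi1.
have : a < nth 0 l i.+1 by rewrite -ei gl_lt.
rewrite -ei; lia.
Qed.

Lemma gl_size : size l = #|` G|%fset.
Proof. by rewrite /l /gap_list size_sort. Qed.

Lemma gl_pred k M :
  (forall i, i.+1 < size l -> (nth 0 l i.+1 - nth 0 l i <= k)%N) ->
  M \in G -> (forall x, x \in G -> x <= M) -> 1 < size l ->
  exists c, [/\ c \in G, c < M & M <= c + k].
Proof.
move=> H MG ub s2.
have [j hj ej] := gl_ex MG.
have hs1 : (size l).-2.+1 = (size l).-1 by lia.
have jl : j = (size l).-1.
  case: (ltngtP j (size l).-1) => h; [|lia|by []].
  have : nth 0 l j < nth 0 l (size l).-1 by rewrite gl_lt //; lia.
  have := ub _ (@gl_nth_mem (size l).-1 ltac:(lia)). rewrite ej; lia.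
exists (nth 0 l (size l).-2); split.
- apply: gl_nth_mem; lia.
- rewrite -ej gl_lt; lia.
- have := H (size l).-2 ltac:(lia). rewrite hs1 -jl ej; lia.
Qed.

End GL.


Lemma card_seqf (s : seq nat) : uniq s -> #|` [fset x in s]|%fset = size s.
Proof. by move=> u; rewrite card_fseq (undup_id u). Qed.

Lemma seqf_mem (s : seq nat) x : (x \in [fset x in s]%fset) = (x \in s).
Proof. by rewrite inE. Qed.

Lemma max_mem (s : seq nat) : \max_(x <- s) x = 0 \/ \max_(x <- s) x \in s.
Proof.
elim: s => [|a s IH]; first by rewrite big_nil; left.
rewrite big_cons {1 3}/maxn; case: ifP => h.
- case: IH => IH; first by left.
  by right; rewrite in_cons IH orbT.
- right; exact: mem_head.
Qed.

Lemma frob_mem (G : {fset nat}) : 0 < frobenius G -> frobenius G \in G.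
Proof.
rewrite /frobenius; case: (max_mem (enum_fset G)) => h; first by rewrite h.
by [].
Qed.

Lemma frob_ub (G : {fset nat}) x : x \in G -> x <= frobenius G.
Proof. move=> h; rewrite /frobenius; apply: (@leq_bigmax_seq _ _ xpredT (fun x => x)) => //. Qed.

Section Sym.
Variables (n : nat) (G : {fset nat}).
Definition fG x := if x \in G then x else (6 * n + 2 - x).
Definition TGs := map fG (iota 1 (3 * n)) ++ [:: 3 * n + 1; 6 * n + 2].
Definition TG := [fset x in TGs]%fset.

Lemma TG_card : #|` TG|%fset = 3 * n + 2.
Proof.
rewrite /TG card_seqf /TGs.
  by rewrite size_cat size_map size_iota /=; lia.
rewrite cat_uniq /= andbT orbF; apply/and3P; split.
- rewrite map_inj_in_uniq ?iota_uniq // => x y.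
  rewrite !mem_iota /fG => hx hy.
  case: (x \in G); case: (y \in G); lia.
- apply/norP; split; apply/mapP => [[y]];
  rewrite mem_iota /fG; case: (y \in G); lia.
- rewrite !inE; lia.
Qed.

Lemma TG_mem x : (x \in TG) =
  [|| has (fun y => fG y == x) (iota 1 (3 * n)), x == 3 * n + 1 | x == 6 * n + 2].
Proof.
rewrite seqf_mem /TGs mem_cat !inE; congr (_ || _).
apply/mapP/hasP => [[y hy ->]|[y hy /eqP <-]]; by exists y.
Qed.

Hypothesis FG : 6 * n + 2 \in G.
Hypothesis gapG : forall z x y : nat, z \in G -> 0 < x -> 0 < y -> z = (x + y)%N ->
    (x \in G) || (y \in G).

Lemma mid_in : 3 * n + 1 \in G.
Proof.
have := gapG (x := 3 * n + 1) (y := 3 * n + 1) FG; rewrite orbb; apply; lia.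
Qed.

Lemma TG_sub : fsubset TG G.
Proof.
apply/fsubsetP => x; rewrite TG_mem => /or3P[|/eqP->|/eqP->//]; last exact: mid_in.
move=> /hasP[y]; rewrite mem_iota /fG => hy.
case yG: (y \in G) => /eqP <- //.
have := gapG (x := y) (y := 6 * n + 2 - y) FG; rewrite yG /=; apply; lia.
Qed.

Lemma sym_fwd : #|` G|%fset = 3 * n + 2 ->
  forall x, 0 < x <= 3 * n -> (x \in G) = (6 * n + 2 - x \notin G).
Proof.
move=> cG x hx.
have eq : TG = G.
  apply/eqP; have := fsubset_leqif_cards TG_sub; rewrite TG_card cG.
  by case => _ <-.
case xG: (x \in G) => /=; last first.
  have : (x \in G) || (6 * n + 2 - x \in G) by apply: gapG FG _ _ _; lia.
  by rewrite xG /= => ->.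
symmetry; apply/negP => hF; have : 6 * n + 2 - x \in TG by rewrite eq.
rewrite TG_mem => /or3P[/hasP[y]|/eqP e|/eqP e]; [|lia|lia].
rewrite mem_iota /fG => hy.
case yG: (y \in G) => /eqP e; first lia.
have yx : y = x by lia.
by move: yG; rewrite yx xG.
Qed.

Lemma sym_card : (forall x, x \in G -> 0 < x <= 6 * n + 2) ->
  (forall x, 0 < x <= 3 * n -> (x \in G) = (6 * n + 2 - x \notin G)) ->
  #|` G|%fset = 3 * n + 2.
Proof.
move=> bG sG.
suff -> : G = TG by exact: TG_card.
apply/eqP; rewrite eqEfsubset TG_sub andbT.
apply/fsubsetP => x xG; rewrite TG_mem.
have := bG _ xG => hx.
case: (ltngtP x (3 * n + 1)) => h.
- apply/orP; left; apply/hasP; exists x; first by rewrite mem_iota; lia.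
  by rewrite /fG xG.
- case: (ltngtP x (6 * n + 2)) => h2; last by apply/or3P; apply: Or33; apply/eqP; lia.
  + apply/orP; left; apply/hasP; exists (6 * n + 2 - x); first by rewrite mem_iota; lia.
    rewrite /fG sG; last lia.
    have -> : 6 * n + 2 - (6 * n + 2 - x) = x by lia.
    rewrite xG /=; apply/eqP; lia.
  + lia.
- by apply/or3P; apply: Or32; apply/eqP; lia.
Qed.

End Sym.


Section GA.
Variable n : nat.
Hypothesis hn : 0 < n.

Definition memG (A : {fset nat}) x : bool :=
 [|| (0 < x <= 2*n), x == 3*n+1, x == 4*n+1, x == 6*n+2,
     (2*n+2 <= x <= 3*n) && (x \in A) |
     (3*n+2 <= x <= 4*n) && (6*n+2-x \notin A)].

Definition GA (A : {fset nat}) : {fset nat} :=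
  [fset x in filter (memG A) (iota 0 (6*n+3))]%fset.

Lemma GA_mem A x : (x \in GA A) = memG A x.
Proof.
rewrite seqf_mem mem_filter mem_iota; case m: (memG A x); last by [].
move: m; rewrite /memG => m; rewrite /=; case: (x \in A) m; case: (6*n+2-x \in A); lia.
Qed.

Lemma GA_sym A x : 0 < x <= 3*n -> (x \in GA A) = (6*n+2-x \notin GA A).
Proof.
move=> hx; rewrite !GA_mem /memG.
have -> : 6*n+2-(6*n+2-x) = x by lia.
case: (x \in A); case: (6*n+2-x \in A); lia.
Qed.

Lemma GA_bound A x : x \in GA A -> 0 < x <= 6*n+2.
Proof. rewrite GA_mem /memG; case: (x \in A); case: (6*n+2-x \in A); lia. Qed.

Lemma GA_F A : 6*n+2 \in GA A.
Proof. rewrite GA_mem /memG; case: (6*n+2 \in A); case: (6*n+2-(6*n+2) \in A); lia. Qed.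

Lemma GA_gap A : gapset (GA A).
Proof.
split; first by apply/negP => /GA_bound; lia.
move=> z x y zG x0 y0 e.
have hz := GA_bound zG.
case: (leqP x (2*n)) => hx.
  by rewrite GA_mem /memG; apply/orP; left; apply/orP; left; lia.
case: (leqP y (2*n)) => hy.
  by rewrite (GA_mem A y) /memG; apply/orP; right; apply/orP; left; lia.
have zF : z = 6*n+2.
  move: zG; rewrite GA_mem /memG; case: (z \in A); case: (6*n+2-z \in A); lia.
case: (leqP x (3*n)) => hx3.
  rewrite (GA_sym A (x := x)); last lia.
  have -> : 6*n+2-x = y by lia.
  by case: (y \in GA A); rewrite ?orbT.
case: (leqP y (3*n)) => hy3.
  rewrite (GA_sym A (x := y)); last lia.
  have -> : 6*n+2-y = x by lia.
  by case: (x \in GA A).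
have -> : x = 3*n+1 by lia.
by rewrite GA_mem /memG; apply/orP; left; apply/orP; right; apply/orP; left; lia.
Qed.

Lemma GA_card A : #|` GA A|%fset = 3*n+2.
Proof.
apply: sym_card.
- exact: GA_F.
- exact: (proj2 (GA_gap A)).
- exact: GA_bound.
- exact: GA_sym.
Qed.

Lemma GA_frob A : frobenius (GA A) = 6*n+2.
Proof.
apply/eqP; rewrite eqn_leq; apply/andP; split.
- rewrite /frobenius; apply/bigmax_leqP_seq => x xG _.
  by have := GA_bound xG; lia.
- exact: frob_ub (GA_F A).
Qed.

Lemma GA_step A a b : a \in GA A -> b \in GA A -> a < b ->
  exists2 c, c \in GA A & a < c <= a + (2*n+1).
Proof.
move=> aG bG ab.
have ha := GA_bound aG; have hb := GA_bound bG.
case: (leqP a (2*n-1)) => h1.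
  exists a.+1; last lia.
  by rewrite GA_mem /memG; apply/orP; left; lia.
case: (leqP a (3*n)) => h2.
  exists (3*n+1); last lia.
  by rewrite GA_mem /memG; apply/orP; right; apply/orP; left; lia.
case: (leqP a (4*n)) => h3.
  exists (4*n+1); last lia.
  by rewrite GA_mem /memG; apply/orP; right; apply/orP; right; apply/orP; left; lia.
have a41 : a = 4*n+1.
  move: aG; rewrite GA_mem /memG; case: (a \in A); case: (6*n+2-a \in A); lia.
exists (6*n+2); [exact: GA_F | lia].
Qed.

Lemma GA_in A : in_G (2 * n + 1)%N (3 * n + 2)%N (GA A) /\ pseudo_symmetric (GA A).
Proof.
split; last by rewrite /pseudo_symmetric GA_frob /genus GA_card; lia.
split; first exact: GA_gap.
split; last exact: GA_card.
split.
- apply: gl_step => a b; exact: GA_step.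
- apply: (gl_gap (a := 4*n+1)); first lia.
  + by rewrite GA_mem /memG; apply/orP; right; apply/orP; right; apply/orP; left; lia.
  + have -> : 4*n+1 + (2*n+1) = 6*n+2 by lia.
    exact: GA_F.
  + move=> c cG c1 c2; move: cG; rewrite GA_mem /memG.
    case: (c \in A); case: (6*n+2-c \in A); lia.
Qed.

End GA.


Section Fwd.
Variable n : nat.
Hypothesis hn : 0 < n.

Definition Bn : {fset nat} := [fset x in iota (2*n+2) (n-1)]%fset.

Lemma Bn_card : #|` Bn|%fset = n - 1.
Proof. by rewrite card_seqf ?iota_uniq // size_iota. Qed.

Definition Af (G : {fset nat}) : {fset nat} :=
  [fset x in filter (fun x => 2*n+2 <= x <= 3*n) (enum_fset G)]%fset.
Lemma AfE G (x : nat) : (x \in Af G) = (2*n+2 <= x <= 3*n) && (x \in G).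
Proof. by rewrite seqf_mem mem_filter. Qed.

Lemma fwd G : in_G (2 * n + 1)%N (3 * n + 2)%N G /\ pseudo_symmetric G ->
  exists2 A, fsubset A Bn & G = GA n A.
Proof.
move=> [[[G0 gapG] [[sp1 sp2] cG]] ps].
rewrite /genus in cG.
rewrite /pseudo_symmetric /genus cG in ps.
have ps' : frobenius G = 6*n+2 by lia.
have FG : 6*n+2 \in G by rewrite -ps'; apply: frob_mem; lia.
have ub : forall x, x \in G -> x <= 6*n+2 by move=> x xG; rewrite -ps'; exact: frob_ub.
have hsym := sym_fwd FG gapG cG.
have hmid := mid_in FG gapG.
have [a [aG bG hb]] := gl_gap_inv sp2 ltac:(lia).
have hlow : forall x, 0 < x <= 2*n -> x \in G.
  move=> x hx; case xG: (x \in G) => //.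
  case yG: (a + (2*n+1) - x \in G).
    by exfalso; apply: (hb _ yG); lia.
  have := gapG _ x (a + (2*n+1) - x) bG.
  rewrite xG yG /= => h; exfalso; have : false by apply: h; lia.
  by [].
have [c [cinG cF Fc]] := gl_pred sp1 FG ub ltac:(rewrite gl_size cG; lia).
have h2n1 : 2*n+1 \notin G.
  have := hsym (6*n+2-c) ltac:(lia).
  have -> : 6*n+2-(6*n+2-c) = c by lia.
  rewrite cinG /= => hx.
  case: (leqP (6*n+2-c) (2*n)) => h.
    by have := hlow (6*n+2-c) ltac:(lia); rewrite hx.
  have e : 2*n+1 = 6*n+2-c by lia.
  by rewrite e hx.
have mA := AfE G.
exists (Af G).
  apply/fsubsetP => x xA.
  have h : (2*n+2 <= x <= 3*n) && (x \in G) by rewrite -mA.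
  rewrite /Bn seqf_mem mem_iota; lia.
suff key : forall x : nat, (x \in G) = memG n (Af G) x.
  apply/fsetP => x; rewrite GA_mem //; exact: (key x).
move=> x; rewrite /memG !mA.
have P1 : forall y, y \in G -> 0 < y <= 6*n+2.
  move=> y yG; rewrite ub // andbT lt0n; apply/eqP => y0.
  by move: G0; rewrite -y0 yG.
have P3 : forall y, 3*n+2 <= y < 6*n+2 -> (y \in G) = (6*n+2-y \notin G).
  move=> y hy; rewrite (hsym (6*n+2-y)); last lia.
  have -> : 6*n+2-(6*n+2-y) = y by lia.
  by rewrite negbK.
have P4 : forall y, y = 2*n+1 -> y \notin G by move=> y ->.
have P5 : forall y, y = 3*n+1 -> y \in G by move=> y ->.
have P6 : forall y, y = 6*n+2 -> y \in G by move=> y ->.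
have := P1 x; have := P1 (6*n+2-x); have := hsym x; have := hsym (6*n+2-x);
have := P3 x; have := P3 (6*n+2-x); have := hlow x; have := hlow (6*n+2-x);
have := P4 x; have := P4 (6*n+2-x); have := P5 x; have := P6 x.
case: (x \in G); case: (6*n+2-x \in G); lia.
Qed.
End Fwd.

Local Open Scope fset_scope.

Lemma GA_inj n (hn : 0 < n) : {in fpowerset (Bn n) &, injective (GA n)}.
Proof.
move=> A1 A2; rewrite !fpowersetE => /fsubsetP s1 /fsubsetP s2 E.
apply/fsetP => x.
have : (x \in GA n A1) = (x \in GA n A2) by rewrite E.
rewrite !GA_mem // /memG.
have := s1 x; have := s2 x; rewrite /Bn !seqf_mem !mem_iota.
case: (x \in A1); case: (x \in A2); case: (6*n+2-x \in A1); case: (6*n+2-x \in A2);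
  lia.
Qed.

Theorem mainTheorem5 (n : nat) (hn : 0 < n) :
  exists S : {fset {fset nat}},
    (forall G : {fset nat},
        G \in S <-> (in_G (2 * n + 1)%N (3 * n + 2)%N G /\ pseudo_symmetric G)) /\
    #|` S| = (2 ^ (n - 1))%N.
Proof.
exists (GA n @` fpowerset (Bn n)); split.
- move=> G; split.
  + move=> /imfsetP [A _ ->]; exact: GA_in.
  + move=> h; have [A sA ->] := fwd hn h.
    by apply/imfsetP; exists A; rewrite ?fpowersetE.
- have /card_in_imfsetP/eqP -> := GA_inj hn.
  by rewrite card_fpowerset Bn_card.
Qed.
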